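(* Let $S=\langle P,\varphi\rangle$ be a SUT model, $t$ a strength, $N\ge1$ an integer and $lb$ an integer with $0\le lb<CAN(t,S)$. If $N\ge CAN(t,S)$, then the optimal cost of the Partial MaxSAT instance $PMSat_{CX}^{N,t,S,lb}$ (defined in the context) is $CAN(t,S)-(lb+1)$; otherwise (i.e. if $N<CAN(t,S)$) it is $\infty$.
   Context: A SUT model is $S=\langle P,\varphi\rangle$, where $P$ is a finite set of parameters, each $p\in P$ having a finite nonempty domain $d(p)$, and $\varphi$ is a propositional formula whose atoms have the form $(p=v)$ with $p\in P$, $v\in d(p)$. A test case is a full assignment $A$ giving each $p$ a value in $d(p)$ such that $\varphi$ is true when each atom $(p=v)$ is read as true iff $A(p)=v$; it is assumed that at least one test case exists. Fix a strength $t$ with $1\le t\le|P|$. A $t$-tuple is an assignment of values to exactly $t$ distinct parameters, viewed as a set of pairs $(p,v)$; a test case covers $\tau$ if it assigns $v$ to $p$ for every $(p,v)\in\tau$. A $t$-tuple is allowed if some test case covers it; $\mathcal T_a$ is the set of allowed $t$-tuples. A covering array $CA(N;t,S)$ is a list of $N$ test cases (repetitions allowed) covering every allowed $t$-tuple; $CAN(t,S)$ is the minimum $N$ for which a $CA(N;t,S)$ exists. $[N]=\{1,\dots,N\}$. A (weighted) Partial MaxSAT instance consists of hard constraints and soft clauses $(c,w)$ with positive integer weight $w$; its optimal cost is the minimum, over truth assignments satisfying all hard constraints, of the total weight of falsified soft clauses, and $\infty$ if the hard constraints are unsatisfiable. Variables: $x_{i,p,v}$ ($i\in[N]$, $p\in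 P$, $v\in d(p)$), $c^i_\tau$ ($i\in[N]$, $\tau\in\mathcal T_a$), $u_i$ ($i\in\{lb+2,\dots,N\}$). Hard constraints of $PMSat_{CX}^{N,t,S,lb}$: (X) for every $i\in[N]$, $p\in P$: exactly one of $\{x_{i,p,v}:v\in d(p)\}$ is true; (SUTX) for every $i\in[N]$: the formula obtained from $\varphi$ by replacing each atom $(p=v)$ with $x_{i,p,v}$; (CX) for every $i\in[N]$, $\tau\in\mathcal T_a$, $(p,v)\in\tau$: $c^i_\tau\rightarrow x_{i,p,v}$; (C) for every $\tau\in\mathcal T_a$: $\bigvee_{i\in[N]}c^i_\tau$; (BSU) for every $i\in\{lb+2,\dots,N-1\}$: $u_{i+1}\rightarrow u_i$; (CU) for every $i\in\{lb+2,\dots,N\}$, $\tau\in\mathcal T_a$: $c^i_\tau\rightarrow u_i$. Soft clauses: $(\neg u_i,1)$ for every $i\in\{lb+2,\dots,N\}$. *)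

(* Defs.v *)
From mathcomp Require Import all_boot.
Set Implicit Arguments. Unset Strict Implicit. Unset Printing Implicit Defensive.

Inductive formula (A : Type) : Type :=
| FTrue | FFalse
| FAtom of A
| FNot of formula A
| FAnd of formula A & formula A
| FOr of formula A & formula A
| FImp of formula A & formula A
| FIff of formula A & formula A.
Arguments FTrue {A}. Arguments FFalse {A}.

Fixpoint eval (A : Type) (rho : A -> bool) (f : formula A) : bool :=
  match f with
  | FTrue => true | FFalse => false
  | FAtom a => rho a
  | FNot g => ~~ eval rho g
  | FAnd g h => eval rho g && eval rho h
  | FOr g h => eval rho g || eval rho h
  | FImp g h => eval rho g ==> eval rho h
  | FIff g h => eval rho g == eval rho h
  end.

Fixpoint fren (A B : Type) (r : A -> B) (f : formula A) : formula B :=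
  match f with
  | FTrue => FTrue | FFalse => FFalse
  | FAtom a => FAtom (r a)
  | FNot g => FNot (fren r g)
  | FAnd g h => FAnd (fren r g) (fren r h)
  | FOr g h => FOr (fren r g) (fren r h)
  | FImp g h => FImp (fren r g) (fren r h)
  | FIff g h => FIff (fren r g) (fren r h)
  end.

Definition big_or (A : Type) (l : seq (formula A)) : formula A := foldr (@FOr A) FFalse l.
Definition big_and (A : Type) (l : seq (formula A)) : formula A := foldr (@FAnd A) FTrue l.
Fixpoint at_most_one (A : Type) (l : seq (formula A)) : formula A :=
  match l with
  | [::] => FTrue
  | a :: l' => FAnd (FImp a (big_and (map (@FNot A) l'))) (at_most_one l')
  end.
Definition exactly_one (A : Type) (l : seq (formula A)) : formula A :=
  FAnd (big_or l) (at_most_one l).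

Record pmsat (V : Type) := PMSat {
  hard : formula V -> Prop;
  soft : seq (formula V * nat) }.

Definition sat_hard (V : Type) (I : pmsat V) (rho : V -> bool) : Prop :=
  forall f, hard I f -> eval rho f.

Definition cost (V : Type) (I : pmsat V) (rho : V -> bool) : nat :=
  \sum_(cw <- soft I | ~~ eval rho cw.1) cw.2.

(* [opt_cost_is I o]: the optimal cost of I is o, where None stands for infinity *)
Definition opt_cost_is (V : Type) (I : pmsat V) (o : option nat) : Prop :=
  match o with
  | None => forall rho, ~ sat_hard I rho
  | Some k => (exists rho, sat_hard I rho /\ cost I rho = k) /\
              (forall rho, sat_hard I rho -> k <= cost I rho)
  end.

(* A SUT model: a finite type of parameters P, domains D p (finite types),
   and a formula phi over atoms (p = v), represented as dependent pairs. *)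
Section SUT.
Variables (P : finType) (D : P -> finType).

Definition PV := {p : P & D p}.
Definition assignment := {dffun forall p : P, D p}.

Definition atom_true (A : assignment) (pv : PV) : bool := A (tag pv) == tagged pv.

Definition test_case (phi : formula PV) (A : assignment) : bool := eval (atom_true A) phi.

Definition is_ttuple (t : nat) (tau : {set PV}) : bool :=
  (#|tau| == t) && [forall x in tau, forall y in tau, (tag x == tag y) ==> (x == y)].

Definition covers (A : assignment) (tau : {set PV}) : bool :=
  [forall pv in tau, atom_true A pv].

Definition allowed (phi : formula PV) (t : nat) (tau : {set PV}) : bool :=
  is_ttuple t tau && [exists A : assignment, test_case phi A && covers A tau].

Definition Ta (phi : formula PV) (t : nat) : {set {set PV}} := [set tau | allowed phi t tau].

Definition is_CA (phi : formula PV) (t N : nat) (s : seq assignment) : Prop :=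
  size s = N /\ all (test_case phi) s /\
  forall tau, tau \in Ta phi t -> has (fun A => covers A tau) s.

Definition is_CAN (phi : formula PV) (t n : nat) : Prop :=
  (exists s, is_CA phi t n s) /\ forall m s, is_CA phi t m s -> n <= m.

Inductive var : Type :=
| Xv of nat & PV
| Cv of nat & {set PV}
| Uv of nat.

Definition hard_CX (phi : formula PV) (N t lb : nat) (f : formula var) : Prop :=
  (exists i (p : P), 1 <= i <= N /\
     f = exactly_one [seq FAtom (Xv i (existT D p v)) | v <- enum (D p)])
  \/ (exists i, 1 <= i <= N /\ f = fren (Xv i) phi)
  \/ (exists i tau pv, [/\ 1 <= i <= N, tau \in Ta phi t, pv \in tau &
        f = FImp (FAtom (Cv i tau)) (FAtom (Xv i pv))])
  \/ (exists tau, tau \in Ta phi t /\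
        f = big_or [seq FAtom (Cv i tau) | i <- iota 1 N])
  \/ (exists i, lb + 2 <= i <= N - 1 /\ f = FImp (FAtom (Uv i.+1)) (FAtom (Uv i)))
  \/ (exists i tau, [/\ lb + 2 <= i <= N, tau \in Ta phi t &
        f = FImp (FAtom (Cv i tau)) (FAtom (Uv i))]).

Definition soft_CX (N lb : nat) : seq (formula var * nat) :=
  [seq (FNot (FAtom (Uv i)), 1) | i <- iota (lb + 2) (N - (lb + 1))].

Definition PMSat_CX (phi : formula PV) (N t lb : nat) : pmsat var :=
  PMSat (hard_CX phi N t lb) (soft_CX N lb).

End SUT.

(* Main.v *)
Require Import Defs.
From mathcomp Require Import all_boot zify.
Set Implicit Arguments. Unset Strict Implicit. Unset Printing Implicit Defensive.

Lemma eval_fren A B (rho : B -> bool) (r : A -> B) f :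
  eval rho (fren r f) = eval (rho \o r) f.
Proof. by elim: f => //= [g -> | g -> h -> | g -> h -> | g -> h -> | g -> h ->]. Qed.

Lemma eq_eval A (r1 r2 : A -> bool) f : r1 =1 r2 -> eval r1 f = eval r2 f.
Proof. move=> E; elim: f => //= *; congruence. Qed.

Lemma eval_big_or A rho (l : seq (formula A)) : eval rho (big_or l) = has (eval rho) l.
Proof. by elim: l => //= a l ->. Qed.

Lemma eval_big_and A rho (l : seq (formula A)) : eval rho (big_and l) = all (eval rho) l.
Proof. by elim: l => //= a l ->. Qed.

Lemma eval_amo (T : eqType) A rho (k : T -> A) l :
  eval rho (at_most_one [seq FAtom (k x) | x <- l]) ->
  forall x y, x \in l -> y \in l -> rho (k x) -> rho (k y) -> x = y.
Proof.
elim: l => //= a l IH /andP[H1 H2] x y.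
rewrite !inE => /predU1P[->|xl] /predU1P[->|yl] kx ky //.
- move: H1; rewrite kx eval_big_and -map_comp all_map /= => /allP/(_ y yl) /=.
  by rewrite ky.
- move: H1; rewrite ky eval_big_and -map_comp all_map /= => /allP/(_ x xl) /=.
  by rewrite kx.
- exact: IH.
Qed.

Lemma amo_intro (T : eqType) A rho (k : T -> A) l x0 :
  uniq l -> (forall y, rho (k y) = (y == x0)) ->
  eval rho (at_most_one [seq FAtom (k x) | x <- l]).
Proof.
move=> + Hk; elim: l => //= a l IH /andP[anl ul].
rewrite IH // andbT Hk; apply/implyP => /eqP ax; subst.
rewrite eval_big_and -map_comp all_map; apply/allP => y yl /=.
rewrite Hk; apply/eqP => yx; subst; by rewrite yl in anl.
Qed.

Section S.
Variables (P : finType) (D : P -> finType).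
Notation pv p v := (@existT P (fun p => D p) p v).

Definition row (rho : var D -> bool) (A0 : assignment D) (i : nat) : assignment D :=
  @finfun P (fun p => D p) (fun p => odflt (A0 p) [pick v | rho (Xv i (pv p v))]).

Lemma rowP phi N t lb rho A0 i : sat_hard (PMSat_CX phi N t lb) rho -> 1 <= i <= N ->
  forall p v, (row rho A0 i p == v) = rho (Xv i (pv p v)).
Proof.
move=> Hs Hi p v.
have : eval rho (exactly_one [seq FAtom (Xv i (pv p v)) | v <- enum (D p)]).
  by apply: Hs; left; exists i, p.
rewrite /exactly_one /= eval_big_or has_map => /andP[/hasP[v0 _ Hv0] Hamo].
have U := eval_amo Hamo.
rewrite /row ffunE; case: pickP => [w Hw|Hn]; last by move: (Hn v0) Hv0 => /= ->.
apply/eqP/idP => [<- //|Hv]; apply: U; rewrite ?mem_enum //.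
Qed.

Lemma row_atom phi N t lb rho A0 i : sat_hard (PMSat_CX phi N t lb) rho -> 1 <= i <= N ->
  forall x, atom_true (row rho A0 i) x = rho (Xv i x).
Proof. by move=> Hs Hi [p v]; rewrite /atom_true /= (rowP A0 Hs Hi). Qed.

Lemma extract phi N t lb rho A0 M : sat_hard (PMSat_CX phi N t lb) rho -> M <= N ->
  (forall i tau, M < i <= N -> tau \in Ta phi t -> ~~ rho (Cv i tau)) ->
  is_CA phi t M [seq row rho A0 i | i <- iota 1 M].
Proof.
move=> Hs HM Hc; split; first by rewrite size_map size_iota.
split.
  apply/allP => y /mapP[i]; rewrite mem_iota => Hi ->.
  have Hi' : 1 <= i <= N by lia.
  rewrite /test_case (eq_eval _ (row_atom A0 Hs Hi')).
  have : eval rho (fren (Xv i) phi) by apply: Hs; right; left; exists i.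
  by rewrite eval_fren.
move=> tau Htau.
have : eval rho (big_or [seq FAtom (Cv i tau) | i <- iota 1 N]).
  by apply: Hs; do 3 right; left; exists tau.
rewrite eval_big_or has_map => /hasP[i]; rewrite mem_iota /= => Hi Hci.
have HiM : i <= M.
  case: (leqP i M) => // Hlt; move: (Hc i tau) Hci; rewrite Htau => H.
  by rewrite (negbTE (H _ isT)) //; lia.
have Hi' : 1 <= i <= N by lia.
apply/hasP; exists (row rho A0 i).
  by apply/mapP; exists i => //; rewrite mem_iota; lia.
apply/forallP => x; apply/implyP => xt; rewrite (row_atom A0 Hs Hi').
have : eval rho (FImp (FAtom (Cv i tau)) (FAtom (Xv i x))).
  by apply: Hs; do 2 right; left; exists i, tau, x; split.
by rewrite /= Hci.
Qed.
End S.

Lemma iota_split a n b : a <= b <= a + n ->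
  iota a n = iota a (b - a) ++ iota b (a + n - b).
Proof. move=> H; have E : b = a + (b - a) by lia.
rewrite {2}E -iotaD; congr iota; lia. Qed.

Lemma count_all_true (p : pred nat) a n : (forall i, a <= i < a + n -> p i) ->
  count p (iota a n) = n.
Proof.
move=> H; rewrite -[RHS](size_iota a n) -count_predT; apply: eq_in_count => i.
by rewrite mem_iota => /H ->.
Qed.

Lemma count_all_false (p : pred nat) a n : (forall i, a <= i < a + n -> ~~ p i) ->
  count p (iota a n) = 0.
Proof.
move=> H; rewrite -(count_pred0 (iota a n)); apply: eq_in_count => i.
by rewrite mem_iota => /H /negbTE ->.
Qed.

Lemma cost_CX (P : finType) (D : P -> finType) phi N t lb (rho : var D -> bool) :
  cost (PMSat_CX phi N t lb) rho = count (fun i => rho (Uv D i)) (iota (lb + 2) (N - (lb + 1))).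
Proof.
rewrite /cost /= /soft_CX big_map /= sum1_count; apply: eq_count => i /=.
by rewrite negbK.
Qed.

Theorem proposition3 (P : finType) (D : P -> finType) (phi : formula (PV D))
    (t N lb can : nat) :
  (exists A : assignment D, test_case phi A) ->
  1 <= t <= #|P| ->
  1 <= N ->
  is_CAN phi t can ->
  lb < can ->
  opt_cost_is (PMSat_CX phi N t lb)
    (if can <= N then Some (can - (lb + 1)) else None).
Proof.
move=> [A0 HA0] Ht HN [[s [Hsz [Hall Hcov]]] Hmin] Hlb.
have Hlow : forall rho, sat_hard (PMSat_CX phi N t lb) rho ->
    can <= N /\ can - (lb + 1) <= cost (PMSat_CX phi N t lb) rho.
  move=> rho Hs; split.
    apply: (Hmin _ _ (extract A0 Hs (leqnn N) _)) => i tau Hi; lia.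
  rewrite cost_CX; set c := count _ _.
  have Hdown : forall i, lb + 2 <= i <= N -> rho (Uv D i) ->
      forall k j, j + k = i -> lb + 2 <= j -> rho (Uv D j).
    move=> i Hi Hu; elim => [|k IH] j Hjk Hj; first by rewrite addn0 in Hjk; rewrite Hjk.
    have Hj1 : rho (Uv D j.+1) by apply: IH => //; lia.
    have : eval rho (FImp (FAtom (Uv D j.+1)) (FAtom (Uv D j))).
      by apply: Hs; do 4 right; left; exists j; split => //; lia.
    by rewrite /= Hj1.
  have HU : forall i, lb + 1 + c < i <= N -> ~~ rho (Uv D i).
    move=> i Hi; apply/negP => Hu.
    have Hd := Hdown i ltac:(lia) Hu.
    have : i - (lb + 1) <= c.
      rewrite /c (@iota_split (lb + 2) (N - (lb + 1)) i.+1); last by lia.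
      rewrite count_cat; apply: leq_trans (leq_addr _ _).
      rewrite count_all_true; first by lia.
      move=> j Hj; apply: (Hd (i - j)); lia.
    lia.
  have := Hmin _ _ (extract A0 Hs (geq_minl N (lb + 1 + c)) _).
  suff : forall (i : nat) (tau : {set PV D}), minn N (lb + 1 + c) < i <= N ->
      tau \in Ta phi t -> ~~ rho (Cv i tau).
    by move=> H /(_ H); lia.
  move=> i tau Hi Htau; apply/negP => Hc.
  have : eval rho (FImp (FAtom (Cv i tau)) (FAtom (Uv D i))).
    by apply: Hs; do 5 right; exists i, tau; split => //; lia.
  rewrite /= Hc /= => Hu; move: (HU i ltac:(lia)); by rewrite Hu.
case: leqP => HcN; last first.
  by move=> rho /Hlow [] /leq_ltn_trans/(_ HcN); rewrite ltnn.
have Htc : forall i, test_case phi (nth A0 s i).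
  move=> i; case: (ltnP i (size s)) => H; last by rewrite nth_default.
  by apply: (allP Hall); exact: mem_nth.
pose rho (v : var D) := match v with
  | Xv i x => atom_true (nth A0 s i.-1) x
  | Cv i tau => (i <= can) && covers (nth A0 s i.-1) tau
  | Uv i => i <= can end.
have Hsat : sat_hard (PMSat_CX phi N t lb) rho.
  move=> f [[i [p [Hi ->]]] | [[i [Hi ->]] | [[i [tau [x [Hi Ht' Hx ->]]]] |
     [[tau [Ht' ->]] | [[i [Hi ->]] | [i [tau [Hi Ht' ->]]]]]]]].
  - rewrite /exactly_one /= eval_big_or has_map; apply/andP; split.
      apply/hasP; exists (nth A0 s i.-1 p); first by rewrite mem_enum.
      by rewrite /= /atom_true /=.
    by apply: (@amo_intro _ _ rho _ _ (nth A0 s i.-1 p)); [exact: enum_uniq|].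
  - by rewrite eval_fren; exact: Htc.
  - by rewrite /=; apply/implyP => /andP[_ /forallP/(_ x)]; rewrite Hx.
  - rewrite eval_big_or has_map; case/hasP: (Hcov tau Ht') => A Ain Acov.
    apply/hasP; exists (index A s).+1.
      by rewrite mem_iota; move: Ain; rewrite -index_mem Hsz; lia.
    have Hl : index A s < can by rewrite -Hsz index_mem.
    by rewrite /= (nth_index A0 Ain) Acov andbT.
  - by rewrite /=; apply/implyP; lia.
  - by rewrite /=; apply/implyP => /andP[].
split => [|rho' /Hlow []//].
exists rho; split => //.
rewrite cost_CX /= (@iota_split (lb + 2) (N - (lb + 1)) can.+1); last by lia.
rewrite count_cat count_all_true; last by move=> i /= Hi; lia.
rewrite count_all_false; last by move=> i /= Hi; lia.
lia.
Qed.
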